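(* In the CDN routing model described in the context, under any routing policy the number of pending requests at any surrogate server $S_i$ is (almost surely, at all times) bounded by $\lceil\psi\mu_i-1\rceil$.
   Context: A CDN has $m$ surrogate servers $S_1,\dots,S_m$ at fixed points $x_1,\dots,x_m$ of a planar network region $G$ of area $\mathcal{A}$. Requests arrive as a Poisson process of rate $\lambda$ with locations i.i.d. uniform on $G$. Server $S_i$ serves requests first-come-first-served with exponential service times of rate $\mu_i$ and unlimited queue; the system starts empty. There is a fixed latency bound $\psi>0$. If $n_i(t)$ requests are pending at $S_i$ at time $t$, let $A_i(t)=\{x\in G:\|x-x_i\|\le\psi-(n_i(t)+1)/\mu_i\}$ (empty if the radius is negative). A routing policy may send a request arriving at time $t$ from location $x$ only to a server $S_i$ with $x\in A_i(t)$ (the requests it can serve within latency $\psi$), or to no surrogate server. *)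

(* Defs.v *)
From HB Require Import structures.
From mathcomp Require Import all_boot all_order all_algebra.
From mathcomp Require Import all_classical all_reals all_analysis.
Set Implicit Arguments. Unset Strict Implicit. Unset Printing Implicit Defensive.
Import Order.TTheory GRing.Theory Num.Def Num.Theory.
Local Open Scope classical_set_scope.
Local Open Scope ring_scope.

Definition edist {R : realType} (x y : R * R) : R :=
  Num.sqrt ((x.1 - y.1) ^+ 2 + (x.2 - y.2) ^+ 2).

Definition area {R : realType} : set (R * R) -> \bar R :=
  (@lebesgue_measure R \x @lebesgue_measure R)%E.

(** A_i(t) when n requests are pending at S_i (located at xi, rate mu):
    the closed disc of radius psi - (n+1)/mu around xi, empty if the radius
    is negative. *)
Definition serve_region {R : realType} (psi mu : R) (xi : R * R) (n : nat)
  : set (R * R) :=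
  let r := psi - (n.+1)%:R / mu in
  if r < 0 then set0 else [set x | edist x xi <= r].

(** Requests are indexed by k : nat in order of arrival; request k arrives at
   time T k. [route k] is the routing decision for request k
   ([Some i] = sent to S_i, [None] = not sent to any surrogate server).
   [S i j] is the service time of the j-th request (j = 0,1,...) routed to
   S_i.  Each server is a single FCFS server with unlimited queue; the system
   starts empty at time 0. *)

Section dynamics.
Context {R : realType} {m : nat}.
Variables (T : nat -> R) (route : nat -> option 'I_m) (S : 'I_m -> nat -> R).

Definition nrouted (i : 'I_m) (k : nat) : nat :=
  (\sum_(j < k) (route j == Some i))%N.

Fixpoint lastdep (k : nat) (i : 'I_m) : R :=
  match k with
  | 0 => 0
  | k'.+1 =>
      if route k' == Some i
      then Num.max (T k') (lastdep k' i) + S i (nrouted i k')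
      else lastdep k' i
  end.

Definition departure (k : nat) (i : 'I_m) : R := lastdep k.+1 i.

Definition is_pending (i : 'I_m) (t : R) (k : nat) : bool :=
  [&& route k == Some i, T k <= t & t < departure k i].

(** number of requests among 0..N-1 pending at S_i at time t;
    the number n_i(t) of pending requests is the supremum over N *)
Definition npending (N : nat) (i : 'I_m) (t : R) : nat :=
  (\sum_(k < N) is_pending i t k)%N.

(** n_i at the arrival time of request k, i.e. the number of earlier
    requests still pending at S_i when request k arrives *)
Definition npending_at_arrival (i : 'I_m) (k : nat) : nat :=
  npending k i (T k).

End dynamics.

Definition admissible_policy {R : realType} {m : nat} (psi : R)
  (mu : 'I_m -> R) (xs : 'I_m -> R * R)
  (T : nat -> R) (X : nat -> R * R) (route : nat -> option 'I_m)
  (S : 'I_m -> nat -> R) : Prop :=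
  forall (k : nat) (i : 'I_m), route k = Some i ->
    serve_region psi (mu i) (xs i) (npending_at_arrival T route S i k) (X k).

Definition arrival_time {R : realType} {T0 : Type} (tau : nat -> T0 -> R)
  (k : nat) (w : T0) : R := \sum_(j < k.+1) tau j w.

Section independence.
Context {d : measure_display} {Omega : measurableType d} {R : realType}.
Variable P : probability Omega R.

Definition rv_events {d' : measure_display} {T' : measurableType d'}
  (Y : Omega -> T') : set (set Omega) :=
  [set Y @^-1` B | B in [set B : set T' | measurable B]].

Definition mutually_independent {I : eqType} (F : I -> set (set Omega))
  : Prop :=
  forall (J : seq I) (A : I -> set Omega), uniq J ->
    (forall j, j \in J -> F j (A j)) ->
    P (\big[setI/setT]_(j <- J) A j) = (\prod_(j <- J) P (A j))%E.

End independence.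

(** index set of the primitive random variables:
    inl (inl k) = k-th inter-arrival time, inl (inr k) = k-th location,
    inr (i, j) = j-th service time at S_i *)
Definition cdn_index (m : nat) := ((nat + nat) + ('I_m * nat))%type.

Definition cdn_events {d : measure_display} {Omega : measurableType d}
  {R : realType} {m : nat}
  (tau : nat -> Omega -> R) (X : nat -> Omega -> R * R)
  (S : 'I_m -> nat -> Omega -> R) (c : cdn_index m) : set (set Omega) :=
  match c with
  | inl (inl k) => rv_events (tau k)
  | inl (inr k) => rv_events (X k)
  | inr (i, j) => rv_events (S i j)
  end.

(* Main.v *)
Require Import Defs.
From HB Require Import structures.
From mathcomp Require Import all_boot all_order all_algebra.
From mathcomp Require Import all_classical all_reals all_analysis.
From mathcomp Require Import zify lra.
Import Order.TTheory GRing.Theory Num.Def Num.Theory.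
Local Open Scope classical_set_scope.
Local Open Scope ring_scope.

Lemma edist_gt0 (R : realType) (x y : R * R) : x != y -> 0 < @Defs.edist R x y.
Proof.
move=> xy; rewrite /Defs.edist sqrtr_gt0 lt_neqAle addr_ge0 ?sqr_ge0 // andbT.
rewrite eq_sym paddr_eq0 ?sqr_ge0 // !sqrf_eq0 !subr_eq0.
apply: contra xy; case: x => a b; case: y => c e /= /andP[/eqP -> /eqP ->].
by [].
Qed.

Lemma int_lt_ceil (R : realType) (z : int) (x : R) : z%:~R < x -> z <= ceil (x - 1).
Proof.
move=> zx.
have h1 : (z - 1)%:~R < (ceil (x - 1))%:~R :> R.
  apply: lt_le_trans (ceil_ge _); rewrite intrB; lra.
rewrite ltr_int in h1; lia.
Qed.

Lemma det_bound (R : realType) m (T : nat -> R) (route : nat -> option 'I_m)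
  (S : 'I_m -> nat -> R) psi (mu : 'I_m -> R) xs X :
  (forall i, 0 < mu i) -> 0 < psi ->
  {homo T : a b / (a <= b)%N >-> a <= b} ->
  (forall k i, X k != xs i) ->
  admissible_policy psi mu xs T X route S ->
  forall i t N, ((npending T route S N i t)%:Z <= ceil (psi * mu i - 1)).
Proof.
move=> mu0 psi0 Tmono Xne adm i t; elim=> [|N IH].
  rewrite /npending big_ord0 ceil_ge0.
  have := mulr_gt0 psi0 (mu0 i); lra.
rewrite /npending big_ord_recr /=.
case Hp: (is_pending T route S i t N); last by rewrite addn0.
move/and3P: Hp => [/eqP Hr HT Ht].
have key : (npending T route S N i t <= npending T route S N i (T N))%N.
  rewrite /npending; apply: leq_sum => j _.
  case: (boolP (is_pending T route S i t j)) => //= /and3P[a b c].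
  suff -> : is_pending T route S i (T N) j by [].
  apply/and3P; split => //.
    exact: Tmono (ltnW (ltn_ord j)).
  exact: le_lt_trans HT c.
have := adm N i Hr; rewrite /serve_region /=.
case: ifP => [_ []|rge /= Hd].
have Hpos := @edist_gt0 R _ _ (Xne N i).
have r0 := lt_le_trans Hpos Hd.
rewrite subr_gt0 ltr_pdivrMr ?mu0 // in r0.
apply: int_lt_ceil.
apply: le_lt_trans r0.
rewrite /npending_at_arrival -/(npending T route S N i t) /=.
rewrite -pmulrn ler_nat addn1 ltnS.
exact: key.
Qed.

Lemma set1_pair (R : realType) (p : R * R) : [set p] = [set p.1] `*` [set p.2].
Proof.
apply/seteqP; split => [q /= ->|[a b] /= [-> ->]] //; by case: p.
Qed.

Lemma area_set1 (R : realType) (p : R * R) : area [set p] = 0%E.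
Proof.
rewrite set1_pair /area product_measure1E ?lebesgue_measure_set1 ?mul0e //.
rewrite [X in (X * _)%E](_ : _ = 0%E) ?mul0e //; exact: lebesgue_measure_set1.
Qed.

Lemma measurable_set1_pair (R : realType) (p : R * R) : measurable [set p].
Proof. rewrite set1_pair; apply: measurableX; exact: measurable_set1. Qed.

Lemma area_set1I (R : realType) (p : R * R) G : measurable G -> area ([set p] `&` G) = 0%E.
Proof.
move=> mG; apply/eqP; rewrite -measure_le0 -(area_set1 _ p).
apply: le_measure; rewrite ?inE.
- by apply: measurableI => //; rewrite set1_pair; apply: measurableX; exact: measurable_set1.
- by rewrite set1_pair; apply: measurableX; exact: measurable_set1.
- exact: subIsetl.
Qed.

Lemma expo_neg0 (R : realType) (lam : R) : exponential_prob lam `]-oo, 0[%classic = 0%E.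
Proof.
rewrite /exponential_prob; apply: integral0_eq => x /=; rewrite in_itv /= => x0.
by rewrite lt0_exponential_pdf.
Qed.
Theorem lemma3
  (R : realType) (d : measure_display) (Omega : measurableType d)
  (P : probability Omega R)
  (m : nat) (xs : 'I_m -> R * R) (G : set (R * R)) (Acal : R)
  (lam psi : R) (mu : 'I_m -> R)
  (tau : nat -> {mfun Omega >-> R})
  (X : nat -> {mfun Omega >-> (R * R)%type})
  (S : 'I_m -> nat -> {mfun Omega >-> R})
  (route : nat -> Omega -> option 'I_m) :
  (* the network region G: measurable, of finite positive area Acal *)
  measurable G -> area G = Acal%:E -> 0 < Acal ->
  (* rates and latency bound *)
  0 < lam -> (forall i, 0 < mu i) -> 0 < psi ->
  (* Poisson arrivals of rate lam: i.i.d. Exp(lam) inter-arrival times *)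
  (forall k B, measurable B ->
     distribution P (tau k) B = exponential_prob lam B) ->
  (* request locations i.i.d. uniform on G *)
  (forall k B, measurable B ->
     P (X k @^-1` B) = (area (B `&` G) * (Acal^-1)%:E)%E) ->
  (* exponential service times of rate mu i at S_i *)
  (forall i j B, measurable B ->
     distribution P (S i j) B = exponential_prob (mu i) B) ->
  (* all these primitive random variables are mutually independent *)
  mutually_independent P (cdn_events (fun k => tau k) (fun k => X k)
                                     (fun i j => S i j)) ->
  (* the routing policy only uses admissible servers *)
  (forall w, admissible_policy psi mu xs
               (fun k => arrival_time (fun j => tau j) k w)
               (fun k => X k w) (fun k => route k w)
               (fun i j => S i j w)) ->
  {ae P, forall w, forall (i : 'I_m) (t : R) (N : nat),
     ((npending (fun k => arrival_time (fun j => tau j) k w)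
                (fun k => route k w) (fun i j => S i j w) N i t)%:Z
      <= Num.ceil (psi * mu i - 1))%R}.
Proof.
move=> mG areaG Ac0 lam0 mu0 psi0 Htau HX HS _ adm.
set bad1 := \bigcup_k ((tau k : Omega -> R) @^-1` `]-oo, 0[%classic).
set bad2 := \bigcup_k \big[setU/set0]_(i < m) ((X k : Omega -> R * R) @^-1` [set xs i]).
have nb1 : P.-negligible bad1.
  apply: negligible_bigcup => k; apply/negligibleP.
    exact: measurable_funPTI.
  have := Htau k _ (@measurable_itv _ `]-oo, 0[).
  by rewrite expo_neg0.
have nb2 : P.-negligible bad2.
  apply: negligible_bigcup => k.
  elim/big_ind: _ => //; [exact: negligible_set0|exact: negligibleU|].
  move=> i _; apply/negligibleP.
    apply: measurable_funPTI; exact: measurable_set1_pair.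
  apply: eq_trans (HX k [set xs i] (measurable_set1_pair _ _)) _.
  by rewrite area_set1I // mul0e.
apply: (negligibleS _ (negligibleU nb1 nb2)).
move=> w /= nQ.
have [//|nb] := pselect ((bad1 `|` bad2) w).
exfalso; apply: nQ.
apply: det_bound => //.
- apply/nondecreasing_seqP => n.
  rewrite /arrival_time [leRHS]big_ord_recr /= lerDl.
  rewrite leNgt; apply/negP => hn; apply: nb; left.
  by exists n.+1 => //=; rewrite in_itv.
- move=> k i; apply/negP => /eqP hk; apply: nb; right.
  exists k => //; rewrite -bigcup_seq; exists i => //=.
  by rewrite mem_index_enum.
Qed.
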